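(* Let $\mathcal{B}$ be a binary number format and $\mathbb{F}^E_m$ a floating-point format with $|\mathbb{F}^E_m\cap[0,1]|\le|\overline{\mathbb{R}}_{\mathcal{B}}|+1$, where $\overline{\mathbb{R}}_{\mathcal{B}}$ is the set of values of $\mathcal{B}$. Let $\mathcal{F}$ be the set of CDFs with atoms in $\overline{\mathbb{R}}_{\mathcal{B}}$ and cumulative probabilities in $\mathbb{F}^E_m$, i.e. probability distributions on the finite totally ordered set $\overline{\mathbb{R}}_{\mathcal{B}}$ whose cumulative probabilities $\Pr(\{y:y\le x\})$, $x\in\overline{\mathbb{R}}_{\mathcal{B}}$, all lie in $\mathbb{F}^E_m$. Then $\max_{F'\in\mathcal{F}}H(F')=m+2-2^{-2^{E-1}+3}$, where $H$ denotes Shannon entropy (in bits).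
   Context: $\overline{\mathbb{R}}=\mathbb{R}\cup\{-\infty,+\infty,\bot\}$ with the strict linear order $-\infty<$ reals $<+\infty<\bot$. A binary number format $\mathcal{B}=(n,\gamma_{\mathcal{B}},\phi_{\mathcal{B}})$ consists of $n\ge1$, a map $\gamma_{\mathcal{B}}:\{0,1\}^n\to\overline{\mathbb{R}}$, and a bijection $\phi_{\mathcal{B}}$ of $\{0,1\}^n$ with $b<_{\mathrm{dict}}b'\Rightarrow\gamma_{\mathcal{B}}(\phi_{\mathcal{B}}(b))\le\gamma_{\mathcal{B}}(\phi_{\mathcal{B}}(b'))$; its set of values is $\overline{\mathbb{R}}_{\mathcal{B}}=\gamma_{\mathcal{B}}(\{0,1\}^n)$. $\mathbb{F}^E_m$ is the IEEE-754-style set of floating-point numbers with $E$ exponent bits and $m$ mantissa bits (bias $2^{E-1}-1$, with subnormals), regarded as a set of reals; $\mathbb{F}^E_m\cap[0,1]$ counts zero once. *)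

(* Defs.v *)
From HB Require Import structures.
From mathcomp Require Import all_boot all_order all_algebra.
From mathcomp Require Import all_classical all_reals exp.
Set Implicit Arguments. Unset Strict Implicit. Unset Printing Implicit Defensive.
Import Order.TTheory GRing.Theory Num.Theory.
Local Open Scope ring_scope.

Section Defs.
Variable R : realType.

(* Extended reals  R ∪ {-oo, +oo, ⊥}  with  -oo < reals < +oo < ⊥. *)
Inductive Rb := RbNinf | RbFin of R | RbPinf | RbBot.

Definition Rb_enc (x : Rb) : R + nat :=
  match x with RbNinf => inr 0%N | RbFin r => inl r | RbPinf => inr 1%N | RbBot => inr 2%N end.
Definition Rb_dec (y : R + nat) : option Rb :=
  match y with
  | inl r => Some (RbFin r)
  | inr 0%N => Some RbNinf | inr 1%N => Some RbPinf | inr 2%N => Some RbBot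
  | _ => None end.
Lemma Rb_encK : pcancel Rb_enc Rb_dec. Proof. by case. Qed.
HB.instance Definition _ := Equality.copy Rb (pcan_type Rb_encK).

Definition Rb_le (x y : Rb) : bool :=
  match x, y with
  | RbNinf, _ => true
  | RbFin r, RbFin s => r <= s
  | RbFin _, RbPinf | RbFin _, RbBot => true
  | RbPinf, RbPinf | RbPinf, RbBot => true
  | RbBot, RbBot => true
  | _, _ => false
  end.

Definition bits (n : nat) := {ffun 'I_n -> bool}.

(* strict dictionary (lexicographic, first bit most significant) order *)
Definition dict_lt n (b b' : bits n) : Prop :=
  exists i : 'I_n, (forall j : 'I_n, (j < i)%N -> b j = b' j) /\ b i = false /\ b' i = true.

Definition is_binfmt n (gamma : bits n -> Rb) (phi : bits n -> bits n) : Prop :=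
  (1 <= n)%N /\ bijective phi /\
  (forall b b', dict_lt b b' -> Rb_le (gamma (phi b)) (gamma (phi b'))).

Definition fmt_vals n (gamma : bits n -> Rb) : seq Rb :=
  undup [seq gamma b | b <- enum {: bits n}].

(* IEEE-754-style floats F^E_m (finite values only), bias 2^(E-1)-1, with
   subnormals; exponent field e ranges over 0 .. 2^E - 2 (all-ones reserved). *)
Definition fbias (E : nat) : int := (2 ^ E.-1)%:Z - 1.
Definition fval (E m : nat) (s : bool) (e k : nat) : R :=
  (-1) ^+ s *
  (if e == 0%N then k%:R * 2 ^ (1 - fbias E - m%:Z)
   else (2 ^ m + k)%:R * 2 ^ (e%:Z - fbias E - m%:Z)).
Definition float_vals (E m : nat) : seq R :=
  undup [seq fval E m t.1.1 (nat_of_ord t.1.2) (nat_of_ord t.2)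
        | t : bool * 'I_(2 ^ E - 1) * 'I_(2 ^ m) <- enum {: bool * 'I_(2 ^ E - 1) * 'I_(2 ^ m)}].
(* |F^E_m ∩ [0,1]| (zero counted once) *)
Definition card_F01 (E m : nat) : nat :=
  size [seq x <- float_vals E m | (0 <= x) && (x <= 1)].

(* probability distributions on the value set, given by their mass functions *)
Definition cdf n (gamma : bits n -> Rb) (p : Rb -> R) (x : Rb) : R :=
  \sum_(y <- fmt_vals gamma | Rb_le y x) p y.
Definition is_Fdist n (gamma : bits n -> Rb) (E m : nat) (p : Rb -> R) : Prop :=
  (forall x, 0 <= p x) /\ (forall x, x \notin fmt_vals gamma -> p x = 0) /\
  \sum_(x <- fmt_vals gamma) p x = 1 /\
  (forall x, x \in fmt_vals gamma -> cdf gamma p x \in float_vals E m).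

Definition log2 (x : R) : R := ln x / ln 2.
Definition entropy n (gamma : bits n -> Rb) (p : Rb -> R) : R :=
  - \sum_(x <- fmt_vals gamma) (if p x == 0 then 0 else p x * log2 (p x)).

End Defs.

(* Main.v *)
Require Import Defs.
From HB Require Import structures.
From mathcomp Require Import all_boot all_order all_algebra.
From mathcomp Require Import all_classical all_reals exp.
From mathcomp Require Import zify ring.
Import Order.TTheory GRing.Theory Num.Theory.
Local Open Scope ring_scope.

Set Implicit Arguments. Unset Strict Implicit. Unset Printing Implicit Defensive.
Local Close Scope ring_scope.

Section NatPart.
Variables m c : nat.
Definition PP := (m + c)%N.
Definition UU := (2 ^ PP)%N.
Definition kf (t : nat) := (trunc_log 2 t - m)%N.
Definition isF (X : nat) := (X <= UU) && (2 ^ kf X %| X).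

Lemma kf_mono t t' : t <= t' -> kf t <= kf t'.
Proof. by move=> h; rewrite /kf leq_sub2r // leq_trunc_log. Qed.

Lemma kf_ge j t : 2 ^ (m + j) <= t -> j <= kf t.
Proof. by move=> h; have := trunc_log_max (isT : 1 < 2) h; rewrite /kf; lia. Qed.

Lemma kf_low t : 0 < kf t -> 2 ^ (m + kf t) <= t.
Proof.
move=> h; have tp : 0 < t.
  by case: t h => //; rewrite /kf trunc_log0.
have := trunc_logP (isT : 1 < 2) tp.
by have -> : (m + kf t = trunc_log 2 t)%N by move: h; rewrite /kf; lia.
Qed.

Lemma kf_high t : t < 2 ^ (m + kf t).+1.
Proof.
apply: (leq_trans (trunc_log_ltn t (isT : 1 < 2))).
by rewrite leq_exp2l // /kf; lia.
Qed.

Lemma kf_pow j : kf (2 ^ (m + j)) = j.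
Proof. by rewrite /kf trunc_expnK //; lia. Qed.

Lemma dvd_gap d a b : d %| a -> d %| b -> a < b -> a + d <= b.
Proof.
move=> /dvdnP[x ->] /dvdnP[y ->].
case: d => [|d]; first by rewrite !muln0.
by rewrite ltn_pmul2r // => hxy; have := leq_mul2r d.+1 x.+1 y; rewrite hxy orbT mulSn; lia.
Qed.

Lemma dvd_pow_kf j t : j <= kf t -> 2 ^ j %| 2 ^ kf t.
Proof. by move=> h; rewrite dvdn_Pexp2l. Qed.

Lemma gap_lemma A Y t : isF A -> isF Y -> A <= t < Y -> 2 ^ kf t <= Y - A.
Proof.
move=> /andP[_ dA] /andP[_ dY] /andP[h1 h2].
case k0: (kf t) => [|k]; first by rewrite expn0; lia.
have low : 2 ^ (m + k.+1) <= t by rewrite -k0; apply: kf_low; rewrite k0.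
have dY' : 2 ^ k.+1 %| Y.
  apply: dvdn_trans dY; apply: dvd_pow_kf; rewrite -k0; apply: kf_mono; lia.
case: (leqP (2 ^ (m + k.+1)) A) => hA.
  have dA' : 2 ^ k.+1 %| A.
    by apply: dvdn_trans dA; apply: dvd_pow_kf; apply: kf_ge.
  have := dvd_gap dA' dY' (leq_ltn_trans h1 h2); lia.
have dP : 2 ^ k.+1 %| 2 ^ (m + k.+1) by rewrite dvdn_Pexp2l //; lia.
have := dvd_gap dP dY' (leq_ltn_trans low h2); lia.
Qed.

Lemma kf_le_P t : t <= UU -> kf t <= PP.
Proof.
move=> h; rewrite /kf; have := leq_trunc_log 2 h.
by rewrite /UU trunc_expnK //; lia.
Qed.

Lemma next_isF A : isF A -> A < UU -> isF (A + 2 ^ kf A).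
Proof.
move=> /andP[hA dA] hU.
have dU : 2 ^ kf A %| UU by rewrite /UU dvdn_Pexp2l // kf_le_P.
have le1 := dvd_gap dA dU hU.
apply/andP; split=> //.
case: (leqP (kf (A + 2 ^ kf A)) (kf A)) => h.
  by apply: dvdn_add; [apply: dvdn_trans dA|]; apply: dvd_pow_kf.
have h2 := kf_low (leq_ltn_trans (leq0n _) h).
have h3 : 2 ^ (m + (kf A).+1) <= A + 2 ^ kf A.
  by apply: leq_trans h2; rewrite leq_exp2l //; lia.
have h4 := kf_high A.
have dP : 2 ^ kf A %| 2 ^ (m + kf A).+1 by rewrite dvdn_Pexp2l //; lia.
have h5 := dvd_gap dA dP h4.
have -> : (A + 2 ^ kf A = 2 ^ (m + (kf A).+1))%N by rewrite addnS in h3 *; lia.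
by rewrite kf_pow dvdn_Pexp2l // leq_addl.
Qed.

Lemma consec_lemma A Y : isF A -> isF Y -> A < Y ->
  (forall t, A < t < Y -> ~~ isF t) ->
  forall t, A <= t < Y -> 2 ^ kf t = (Y - A)%N.
Proof.
move=> fA fY hAY hnone.
have g0 := gap_lemma fA fY (t:=A).
have hY : Y = (A + 2 ^ kf A)%N.
  have h1 : A + 2 ^ kf A <= Y by have := g0; rewrite leqnn hAY; lia.
  case: (ltnP (A + 2 ^ kf A) Y) => h2; last by lia.
  have hU : A < UU by case/andP: fY => hY _; lia.
  have h3 : A < A + 2 ^ kf A by have := expn_gt0 2 (kf A); lia.
  by have := hnone (A + 2 ^ kf A); rewrite next_isF // h2 h3 => /(_ isT).
move=> t ht.
have e1 := gap_lemma fA fY ht.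
have e2 : kf A <= kf t by apply: kf_mono; case/andP: ht.
apply/eqP; rewrite eqn_leq e1 /=.
rewrite hY addKn leq_exp2l //.
Qed.

Lemma kf_eq j t : 2 ^ (m + j) <= t < 2 ^ (m + j.+1) -> kf t = j.
Proof.
move=> /andP[h1 h2]; apply/eqP; rewrite eqn_leq kf_ge // andbT.
case: (leqP (kf t) j) => // h; have := kf_low (leq_ltn_trans (leq0n _) h).
move=> h3; have : 2 ^ (m + j.+1) <= 2 ^ (m + kf t) by rewrite leq_exp2l //; lia.
lia.
Qed.

Lemma sum_kf j : (\sum_(0 <= t < 2 ^ (m + j)) kf t + 2 ^ (m + j).+1 = 2 ^ m * (j * 2 ^ j + 2))%N.
Proof.
elim: j => [|j IH].
  rewrite big_nat_cond big1; first by rewrite add0n addn0 expnS mulnC.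
  move=> t /andP[/andP[_ ht] _]; case k: (kf t) => [//|k'].
  have := @kf_low t; rewrite k => /(_ isT).
  have : 2 ^ m <= 2 ^ (m + k'.+1) by rewrite leq_exp2l //; lia.
  rewrite addn0 in ht; lia.
have le : 2 ^ (m + j) <= 2 ^ (m + j.+1) by rewrite leq_exp2l //; lia.
rewrite (@big_cat_nat _ _ _ (2 ^ (m + j))) //=.
rewrite [X in _ + X + _](eq_big_nat _ _ (F2 := fun _ => j)); last by move=> t ht; exact: kf_eq ht.
rewrite sum_nat_const_nat.
have e1 : (2 ^ (m + j.+1) = 2 * (2 ^ m * 2 ^ j))%N by rewrite addnS expnS expnD.
have e2 : (2 ^ (m + j) = 2 ^ m * 2 ^ j)%N by rewrite expnD.
have e3 : (2 ^ (m + j).+1 = 2 * (2 ^ m * 2 ^ j))%N by rewrite expnS expnD.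
have e4 : (2 ^ (m + j.+1).+1 = 4 * (2 ^ m * 2 ^ j))%N by rewrite expnS addnS expnS expnD mulnA.
rewrite e1 e2 e4 expnS; rewrite e3 e2 in IH.
move: IH; generalize (\sum_(0 <= i < 2 ^ m * 2 ^ j) kf i)%N (2 ^ m)%N (2 ^ j)%N => S a q IH.
have -> : (2 * (a * q) - a * q = a * q)%N by lia.
lia.
Qed.
End NatPart.

Local Open Scope ring_scope.

Section RealPart.
Variables (R : realType) (m c : nat).
Local Notation P := (PP m c).
Local Notation U := (UU m c).
Local Notation kf := (kf m).
Local Notation isF := (isF m c).

Definition uu : R := ((2 ^ P)%N%:R)^-1.
Definition fv (X : nat) : R := X%:R * uu.
Definition e0 (y : R) : R := if y == 0 then 0 else y * log2 y.
Definition hh (t : nat) : R := P%:R - (kf t)%:R.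
Definition GG (X : nat) : R := \sum_(0 <= t < X) hh t * uu.

Lemma uu_gt0 : 0 < uu.
Proof. by rewrite invr_gt0 ltr0n expn_gt0. Qed.

Lemma ln2_gt0 : 0 < ln (2 : R).
Proof. by apply: ln_gt0; rewrite ltr1n. Qed.

Lemma log2M (x y : R) : 0 < x -> 0 < y -> log2 (x * y) = log2 x + log2 y.
Proof. by move=> hx hy; rewrite /log2 lnM ?posrE // mulrDl. Qed.

Lemma log2_pow k : log2 ((2 ^ k)%N%:R) = k%:R :> R.
Proof.
rewrite /log2 natrX lnXn ?ltr0n //.
have := ln2_gt0; move: (ln 2) => l hl.
by rewrite -[l *+ k]mulr_natr mulrAC divff ?mul1r // lt0r_neq0.
Qed.

Lemma log2_uu : log2 uu = - P%:R.
Proof. by rewrite /log2 /uu lnV ?posrE ?ltr0n ?expn_gt0 // mulNr -/(log2 _) log2_pow. Qed.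

Lemma log2_le (x y : R) : 0 < x -> x <= y -> log2 x <= log2 y.
Proof.
move=> hx hxy; rewrite /log2 ler_pM2r ?invr_gt0 ?ln2_gt0 //.
by rewrite ler_ln ?posrE // (lt_le_trans hx).
Qed.

Lemma fv_inj : injective fv.
Proof.
move=> x y; rewrite /fv => /(mulIf (lt0r_neq0 uu_gt0)) /eqP.
by rewrite eqr_nat => /eqP.
Qed.

Lemma fv_le x y : (fv x <= fv y) = (x <= y)%N.
Proof. by rewrite /fv ler_pM2r ?uu_gt0 // ler_nat. Qed.

Lemma fvB x y : (x <= y)%N -> fv (y - x) = fv y - fv x.
Proof. by move=> h; rewrite /fv natrB // mulrBl. Qed.

Lemma fvU : fv U = 1.
Proof. by rewrite /fv /uu divff // pnatr_eq0 -lt0n expn_gt0. Qed.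

Lemma fv0 : fv 0 = 0.
Proof. by rewrite /fv mul0r. Qed.

Lemma GG_split A Y : (A <= Y)%N -> GG Y - GG A = \sum_(A <= t < Y) hh t * uu.
Proof. by move=> h; rewrite /GG (@big_cat_nat _ _ _ A) //= addrAC subrr add0r. Qed.

Lemma e0_const A Y : (A < Y)%N ->
  - e0 (fv (Y - A)%N) = \sum_(A <= t < Y) (P%:R - log2 ((Y - A)%N%:R)) * uu.
Proof.
move=> h; rewrite sumr_const_nat /e0 /fv.
have D0 : (0 < Y - A)%N by rewrite subn_gt0.
rewrite mulf_eq0 pnatr_eq0 eqn0Ngt D0 (negbTE (lt0r_neq0 uu_gt0)) /=.
rewrite log2M ?ltr0n ?uu_gt0 // log2_uu -[RHS]mulr_natr.
move: (log2 ((Y - A)%N%:R : R)) (uu) ((Y - A)%N%:R : R) ((PP m c)%:R : R) => L v d p.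
by rewrite -mulrN opprB mulrC mulrA mulrAC.
Qed.

Lemma testg A Y t : isF A -> isF Y -> (A <= t < Y)%N -> (2 ^ kf t <= Y - A)%N.
Proof. move=> fA fY ht. exact: (gap_lemma fA fY ht). Qed.
Lemma key_le A Y : isF A -> isF Y -> (A <= Y)%N -> - e0 (fv (Y - A)%N) <= GG Y - GG A.
Proof.
move=> fA fY hAY; case: (eqVneq A Y) => [<-|hne].
  by rewrite subnn fv0 /e0 eqxx oppr0 subrr.
have h : (A < Y)%N by rewrite ltn_neqAle hne.
rewrite GG_split // e0_const //.
apply: ler_sum_nat => t ht.
rewrite ler_pM2r ?uu_gt0 // /hh lerD2l lerN2.
rewrite -(log2_pow (kf t)); apply: log2_le; first by rewrite ltr0n expn_gt0.
rewrite ler_nat.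
exact: (testg fA fY ht). Qed.


Lemma key_eq A Y : isF A -> isF Y -> (A < Y)%N ->
  (forall t, (A < t < Y)%N -> ~~ isF t) -> - e0 (fv (Y - A)%N) = GG Y - GG A.
Proof.
move=> fA fY h hn.
rewrite GG_split ?(ltnW h) // e0_const //.
apply: eq_big_nat => t ht.
congr (_ * _).
rewrite /hh.
have e := consec_lemma fA fY h hn ht.
rewrite -e.
by rewrite log2_pow.
Qed.
End RealPart.

Section FloatPart.
Variables (R : realType) (E m : nat).
Hypothesis hE : (2 <= E)%N.
Definition cc := (2 ^ E.-1 - 2)%N.
Local Notation P := (PP m cc).
Local Notation U := (UU m cc).
Local Notation kf := (kf m).
Local Notation isF := (isF m cc).
Local Notation fv := (@fv R m cc).
Local Notation uu := (@uu R m cc).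

Lemma hb : (2 ^ E.-1 = cc + 2)%N.
Proof.
have : (2 <= 2 ^ E.-1)%N.
  by rewrite -{1}(expn1 2) leq_exp2l //; case: E hE => [|[|]].
rewrite /cc; lia.
Qed.

Lemma hE2 : (2 ^ E = 2 * (cc + 2))%N.
Proof. by rewrite -hb -expnS prednK // (leq_trans _ hE). Qed.

Lemma pow_shift (j : nat) : (2:R) ^ (j%:Z - P%:Z) = (2 ^ j)%N%:R * uu.
Proof.
rewrite expfzDr ?pnatr_eq0 // -exprnP -exprnN natrX /uu natrX.
by [].
Qed.

Lemma exp0_eq : (1 - fbias E - m%:Z = 0%:Z - P%:Z)%R.
Proof. have := hb; rewrite /fbias /PP; lia. Qed.

Lemma expS_eq e : (0 < e)%N -> (e%:Z - fbias E - m%:Z = (e.-1)%:Z - P%:Z)%R.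
Proof. have := hb; rewrite /fbias /PP; lia. Qed.

Lemma fval0 k : fval R E m false 0 k = fv k.
Proof. by rewrite /fval /= mul1r exp0_eq pow_shift expn0 mul1r. Qed.

Lemma fvalS e k : (0 < e)%N ->
  fval R E m false e k = fv ((2 ^ m + k) * 2 ^ e.-1)%N.
Proof.
move=> he; rewrite /fval /= mul1r.
have -> : (e == 0%N) = false by case: e he.
by rewrite expS_eq // pow_shift /fv natrM mulrA.
Qed.

Lemma kf_lowb X : (2 ^ m <= X)%N -> (2 ^ (m + kf X) <= X)%N.
Proof.
move=> h; have Xp : (0 < X)%N by apply: leq_trans h; rewrite expn_gt0.
have h1 := trunc_log_max (isT : (1 < 2)%N) h.
have -> : (m + kf X = trunc_log 2 X)%N by rewrite /kf; lia.
exact: trunc_logP.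
Qed.

Lemma kf_small X : (X < 2 ^ m.+1)%N -> kf X = 0%N.
Proof.
move=> h; case k: (kf X) => [//|k'].
have := @kf_low m X; rewrite k => /(_ isT).
have : (2 ^ m.+1 <= 2 ^ (m + k'.+1))%N by rewrite leq_exp2l //; lia.
lia.
Qed.

Lemma isF0 : isF 0.
Proof. by rewrite /isF leq0n dvdn0. Qed.

Lemma float_mem x : x \in float_vals R E m ->
  exists s e k, (e < 2 ^ E - 1)%N /\ (k < 2 ^ m)%N /\ x = fval R E m s e k.
Proof.
rewrite /float_vals mem_undup => /mapP[[[s e] k] _ ->].
by exists s, e, k; split; [apply: ltn_ord|split; [apply: ltn_ord|]].
Qed.

Lemma float_memI s e k : (e < 2 ^ E - 1)%N -> (k < 2 ^ m)%N ->
  fval R E m s e k \in float_vals R E m.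
Proof.
move=> he hk; rewrite /float_vals mem_undup.
apply/mapP; exists ((s, Ordinal he), Ordinal hk); first by rewrite mem_enum.
by [].
Qed.

Lemma fval_ge0 e k : 0 <= fval R E m false e k.
Proof.
case: e => [|e]; first by rewrite fval0 /fv mulr_ge0 // ltW // uu_gt0.
by rewrite fvalS // /fv mulr_ge0 // ltW // uu_gt0.
Qed.

Lemma float_repr x : x \in float_vals R E m -> 0 <= x -> x <= 1 ->
  exists X, isF X /\ x = fv X.
Proof.
move=> /float_mem[s [e [k [he [hk ->]]]]] h0 h1.
case: s h0 h1 => h0 h1.
  have hv := fval_ge0 e k.
  have e1 : fval R E m true e k = - fval R E m false e k.
    by rewrite /fval /= expr1 !mulN1r mul1r.
  have hz : fval R E m true e k = 0.
    by apply/eqP; rewrite eq_le h0 andbT e1 oppr_le0.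
  by exists 0%N; rewrite hz fv0; split=> //; apply: isF0.
case: e he h0 h1 => [|e] he h0 h1.
  rewrite fval0 in h0 h1 *; exists k; split=> //.
  rewrite /isF kf_small ?expn0 ?dvd1n ?andbT; last by rewrite expnS; lia.
  by rewrite /UU /PP; apply: leq_trans (ltnW hk) _; rewrite leq_exp2l // leq_addr.
rewrite fvalS // in h0 h1 *; exists ((2 ^ m + k) * 2 ^ e)%N; split=> //.
rewrite /isF; apply/andP; split.
  by rewrite -(@fv_le R m cc) fvU.
rewrite (@kf_eq m e); first by rewrite dvdn_mull.
rewrite !expnD !expnS; apply/andP; split; nia.
Qed.

Lemma float_of_isF X : isF X -> fv X \in float_vals R E m.
Proof.
move=> /andP[hU hd].
case: (ltnP X (2 ^ m)) => hX.
  by rewrite -fval0; apply: float_memI => //; rewrite hE2; lia.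
have hl := kf_lowb hX.
have hh := kf_high m X.
move: hd => /dvdnP[Y hY].
set j := kf X in hl hh hY.
have hjc : (j <= cc)%N.
  by rewrite /j -(kf_pow m cc); apply: kf_mono.
have p0 : (0 < 2 ^ j)%N by rewrite expn_gt0.
have hY1 : (2 ^ m <= Y)%N.
  by move: hl; rewrite hY expnD leq_pmul2r.
have hY2 : (Y < 2 ^ m.+1)%N.
  by move: hh; rewrite hY -addSn expnD ltn_pmul2r.
have -> : X = ((2 ^ m + (Y - 2 ^ m)) * 2 ^ (j.+1).-1)%N by rewrite hY /=; congr (_ * _); lia.
rewrite -fvalS //; apply: float_memI.
  by rewrite hE2; lia.
by move: hY2; rewrite expnS; lia.
Qed.
End FloatPart.

Section ListPart.
Variables (R : realType) (m c : nat).
Local Notation P := (PP m c).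
Local Notation U := (UU m c).
Local Notation kf := (kf m).
Local Notation isF := (isF m c).
Local Notation fv := (@fv R m c).
Local Notation GG := (@GG R m c).
Local Notation e0 := (@e0 R).

Definition prefF (a : R) (L : seq R) := forall i, (i < size L)%N ->
  exists X, isF X /\ a + \sum_(y <- take i.+1 L) y = fv X.

Lemma prefF_cons a y L : prefF a (y :: L) ->
  (exists X, isF X /\ a + y = fv X) /\ prefF (a + y) L.
Proof.
move=> h; split.
  by have [X [hX e]] := h 0%N isT; exists X; rewrite /= take0 big_seq1 in e.
move=> i hi; have [X [hX e]] := h i.+1 hi.
by exists X; split => //; rewrite /= big_cons addrA in e.
Qed.

Lemma prefF_consI a y L : (exists X, isF X /\ a + y = fv X) -> prefF (a + y) L ->
  prefF a (y :: L).
Proof.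
move=> [X [hX e]] h [|i] hi.
  by exists X; rewrite /= take0 big_seq1.
by have [Z [hZ e']] := h i hi; exists Z; rewrite /= big_cons addrA.
Qed.

Lemma ub_list (L : seq R) (A : nat) : isF A -> all (fun y => 0 <= y) L ->
  prefF (fv A) L -> exists Z, [/\ isF Z, fv A + \sum_(y <- L) y = fv Z, (A <= Z)%N &
  - \sum_(y <- L) e0 y <= GG Z - GG A].
Proof.
elim: L A => [|y L IH] A hA.
  by move=> _ _; exists A; rewrite !big_nil addr0 oppr0 subrr.
move=> /= /andP[hy hL] /prefF_cons[[Y [hY e]] hp].
have hAY : (A <= Y)%N by rewrite -(@fv_le R m c) -e lerDl.
have ey : y = fv (Y - A)%N by rewrite fvB // -e addrC addKr.
rewrite e in hp; have [Z [hZ eZ hYZ hle]] := IH Y hY hL hp.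
exists Z; split => //.
- by rewrite big_cons addrA e.
- exact: leq_trans hYZ.
rewrite big_cons opprD.
have := key_le R hA hY hAY; rewrite -ey => h1.
by have := lerD h1 hle; rewrite (addrC (GG Y - GG A)) addrA subrK.
Qed.

Definition rr (a b : nat) : bool :=
  (a < b)%N && all (fun t => (t <= a)%N || ~~ isF t) (iota 0 b).

Lemma ex_list (s : seq nat) (A : nat) : isF A -> all isF s -> path rr A s ->
  let L := pairmap (fun a b => fv (b - a)%N) A s in
  [/\ prefF (fv A) L, fv A + \sum_(y <- L) y = fv (last A s),
      - \sum_(y <- L) e0 y = GG (last A s) - GG A & all (fun y => 0 <= y) L].
Proof.
elim: s A => [|Y s IH] A hA.
  by move=> _ _ /=; split; [move=> i| rewrite big_nil addr0 | rewrite big_nil oppr0 subrr |].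
move=> /= /andP[hY hs] /andP[/andP[hAY hall] hp].
have e : fv A + fv (Y - A)%N = fv Y by rewrite fvB ?(ltnW hAY) // addrC subrK.
have [h1 h2 h3 h4] := IH Y hY hs hp.
split.
- apply: prefF_consI; first by exists Y.
  by rewrite e.
- by rewrite big_cons addrA e.
- rewrite big_cons opprD h3 (key_eq R hA hY hAY).
    by rewrite addrC addrA subrK.
  move=> t /andP[h5 h6].
  have : t \in iota 0 Y by rewrite mem_iota.
  move: hall => /allP hall /hall /orP[|//].
  by rewrite leqNgt h5.
- by rewrite h4 andbT /fv mulr_ge0 // ltW // uu_gt0.
Qed.

Lemma prefF_nseq a k L : (exists X, isF X /\ a = fv X) -> prefF a L ->
  prefF a (nseq k 0 ++ L).
Proof.
move=> hX hL; elim: k => [//|k IH] /=.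
apply: prefF_consI; first by rewrite addr0.
by rewrite addr0.
Qed.

Lemma path_filter k lo j : isF lo -> (lo < j)%N ->
  (forall t, (lo < t < j)%N -> ~~ isF t) -> path rr lo [seq t <- iota j k | isF t].
Proof.
elim: k lo j => [//|k IH] lo j hlo hj hn /=.
case hfj: (isF j) => /=.
  apply/andP; split.
    rewrite /rr hj /=; apply/allP => t; rewrite mem_iota add0n => /andP[_ ht].
    case: (leqP t lo) => //= h; apply: hn; by rewrite h.
  apply: IH => // t /andP[h1 h2]; lia.
apply: IH => // [|t /andP[h1 h2]]; first by lia.
case: (ltnP t j) => h3; first by apply: hn; rewrite h1.
have et : t = j by lia.
by rewrite et hfj.
Qed.

Lemma isFU : isF U.
Proof. by rewrite /isF leqnn /UU /PP kf_pow dvdn_Pexp2l // leq_addl. Qed.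

Lemma U_gt0 : (0 < U)%N.
Proof. by rewrite expn_gt0. Qed.

Definition sF := [seq t <- iota 1 U | isF t].

Lemma last_sF : last 0%N sF = U.
Proof.
have eU : U = (U.-1 + 1)%N by rewrite addn1 prednK // U_gt0.
rewrite /sF {1}eU iotaD filter_cat last_cat /=.
by rewrite addnC -eU isFU.
Qed.

Lemma path_sF : path rr 0 sF.
Proof.
apply: path_filter => //.
move=> t; lia.
Qed.

Lemma all_sF : all isF sF.
Proof. by apply/allP => t; rewrite mem_filter => /andP[]. Qed.

Lemma uniq_sF0 : uniq (0%N :: sF).
Proof.
rewrite /= filter_uniq ?iota_uniq // andbT mem_filter mem_iota.
by rewrite andbF.
Qed.
End ListPart.

Section RbPart.
Variable R : realType.
Implicit Types x y z : Rb R.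

Lemma Rb_le_refl x : Rb_le x x.
Proof. by case: x => //= r; exact: lexx. Qed.

Lemma Rb_le_total : total (@Rb_le R).
Proof. by case=> [|r||] [|s||] //=; exact: le_total. Qed.

Lemma Rb_le_anti x y : Rb_le x y -> Rb_le y x -> x = y.
Proof.
case: x => [|r||]; case: y => [|s||] //= h1 h2.
by congr RbFin; apply/eqP; rewrite eq_le h1 h2.
Qed.

Lemma Rb_le_trans : transitive (@Rb_le R).
Proof.
case=> [|r||] [|s||] [|t||] //= h1 h2; exact: le_trans h1 h2.
Qed.

Lemma cdf_take (w : seq (Rb R)) (p : Rb R -> R) (x0 : Rb R) i :
  uniq w -> sorted (@Rb_le R) w -> (i < size w)%N ->
  \sum_(y <- w | Rb_le y (nth x0 w i)) p y = \sum_(y <- take i.+1 (map p w)) y.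
Proof.
elim: w i => [//|z w IH] i /= /andP[zw uw] sw hi.
have hall : all (Rb_le z) w by apply: order_path_min => //; exact: Rb_le_trans.
have sw' : sorted (@Rb_le R) w by apply: path_sorted sw.
case: i hi => [|i] hi.
  rewrite /= take0 big_seq1 big_cons Rb_le_refl big1_seq ?addr0 //.
  move=> y /andP[hyz hy]; exfalso.
  have := Rb_le_anti hyz (allP hall y hy) => e.
  by rewrite -e hy in zw.
rewrite /= big_cons big_cons.
have -> : Rb_le z (nth x0 w i) by apply: (allP hall); rewrite mem_nth.
by rewrite IH.
Qed.
End RbPart.

Lemma alg_id (R : realType) (a q S mm cc0 : R) : a != 0 -> q != 0 ->
  S + 2 * (a * q) = a * (cc0 * q + 2) ->
  ((mm + cc0) * (a * q) - S) * (a * q)^-1 = mm + 2 - 2 * q^-1.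
Proof.
move=> ha hq hS.
have -> : S = a * (cc0 * q + 2) - 2 * (a * q) by rewrite -hS addrK.
field.
by rewrite hq ha.
Qed.

Lemma GGU (R : realType) E m : (2 <= E)%N ->
  @GG R m (cc E) (UU m (cc E)) = m%:R + 2 - 2 ^ (3 - (2 ^ E.-1)%:Z).
Proof.
move=> hE.
set c := cc E.
rewrite /GG /hh -big_distrl /= sumrB sumr_const_nat subn0 -natr_sum.
have hs := sum_kf m c.
move/(congr1 (fun n : nat => n%:R : R)): hs.
rewrite /UU /PP /uu -[(m + c)%N%:R *+ _]mulr_natr.
move: (\sum_(0 <= t < 2 ^ (m + c)) kf m t)%N => Sn.
rewrite natrD => hS.
have eS : (Sn%:R : R) = (2 ^ m * (c * 2 ^ c + 2))%N%:R - (2 ^ (m + c).+1)%N%:R.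
  by rewrite -hS addrK.
rewrite eS.
have -> : (3 - (2 ^ E.-1)%:Z = 1 + (- (c%:Z)))%R by have := hb hE; rewrite /c; lia.
rewrite expfzDr ?pnatr_eq0 // expr1z -exprnN.
rewrite !natrM !natrD !natrM !expnS !natrM !expnD !natrM !natrX.
have ha : (2 : R) ^+ m != 0 by rewrite expf_neq0 ?pnatr_eq0.
have hq : (2 : R) ^+ c != 0 by rewrite expf_neq0 ?pnatr_eq0.
move: ha hq; move: (2 ^+ m : R) (2 ^+ c : R) => a q ha hq.
field.
by rewrite ha hq.
Qed.

Lemma map_index_nth (R : realType) (T : eqType) (x0 : T) (w : seq T) (L : seq R) :
  uniq w -> size L = size w -> map (fun x => nth 0 L (index x w)) w = L.
Proof.
move=> uw hs; apply: (@eq_from_nth _ 0); first by rewrite size_map hs.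
move=> i; rewrite size_map => hi.
by rewrite (nth_map x0) // index_uniq.
Qed.

Unset Implicit Arguments. Set Strict Implicit.

Theorem propositionD3 (R : realType) (n : nat)
  (gamma : bits n -> Rb R) (phi : bits n -> bits n) (E m : nat) :
  is_binfmt gamma phi ->
  (2 <= E)%N ->
  (card_F01 R E m <= (size (fmt_vals gamma)).+1)%N ->
  let target : R := m%:R + 2 - 2 ^ (3 - (2 ^ E.-1)%:Z) in
  (exists p : Rb R -> R, is_Fdist gamma E m p /\ entropy gamma p = target) /\
  (forall p : Rb R -> R, is_Fdist gamma E m p -> entropy gamma p <= target).
Proof.
move=> _ hE hcard target.
have GU := GGU R m hE.
have GG0 : @GG R m (cc E) 0 = 0 by rewrite /GG big_geq.
set w := sort (@Rb_le R) (fmt_vals gamma).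
have pw : perm_eq w (fmt_vals gamma) by rewrite /w perm_sort.
have uV : uniq (fmt_vals gamma) := undup_uniq _.
have uw : uniq w by rewrite (perm_uniq pw).
have sw : sorted (@Rb_le R) w := sort_sorted (@Rb_le_total R) (fmt_vals gamma).
have pV : perm_eq (fmt_vals gamma) w by rewrite perm_sym.
have sz : size w = size (fmt_vals gamma) := perm_size pw.
have hcdf : forall (p : Rb R -> R) i, (i < size w)%N ->
    cdf gamma p (nth (RbBot R) w i) = \sum_(y <- take i.+1 (map p w)) y.
  by move=> p i hi; rewrite /cdf -(perm_big _ pw) cdf_take.
have hent : forall p : Rb R -> R, entropy gamma p = - \sum_(y <- map p w) e0 y.
  by move=> p; rewrite /entropy (perm_big _ pV) big_map.
have hsum : forall p : Rb R -> R, \sum_(x <- (fmt_vals gamma)) p x = \sum_(y <- map p w) y.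
  by move=> p; rewrite (perm_big _ pV) big_map.
split; last first.
  move=> p [hp0 [hpoff [hp1 hpc]]].
  set L := map p w.
  have hL0 : all (fun y => 0 <= y) L by apply/allP => y /mapP[x _ ->].
  have hpref : @prefF R m (cc E) (@fv R m (cc E) 0%N) L.
    move=> i hi; rewrite size_map in hi.
    set x := nth (RbBot R) w i.
    have xV : x \in (fmt_vals gamma) by rewrite -(perm_mem pw) mem_nth.
    have ec := hcdf p i hi.
    have hf := hpc x xV.
    have c0 : 0 <= cdf gamma p x by rewrite /cdf sumr_ge0.
    have c1 : cdf gamma p x <= 1.
      rewrite -hp1 /cdf [X in _ <= X](bigID (fun y => Rb_le y x)) /= lerDl.
      by rewrite sumr_ge0.
    have [X [hX eX]] := float_repr hE hf c0 c1.
    by exists X; rewrite fv0 add0r -ec.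
  have [Z [hZ eZ _ hle]] := ub_list (isF0 E m) hL0 hpref.
  have eZU : Z = UU m (cc E).
    apply: (@fv_inj R m (cc E)); rewrite -eZ fvU fv0 add0r -hp1 hsum.
    by [].
  by rewrite hent -/L /target -GU -eZU; move: hle; rewrite GG0 subr0.
set c := cc E.
set s := sF m c.
set M := size s.
have hM : (M <= size (fmt_vals gamma))%N.
  have hsub : {subset map (@fv R m c) (0%N :: s) <=
      [seq x <- float_vals R E m | (0 <= x) && (x <= 1)]}.
    move=> x /mapP[X hX ->].
    have fX : isF m c X.
      move: hX; rewrite inE => /orP[/eqP ->|hX]; first exact: isF0 E m.
      exact: (allP (all_sF m c)).
    rewrite mem_filter float_of_isF // andbT.
    rewrite -(fv0 R m c) -(fvU R m c) !fv_le leq0n /=.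
    by case/andP: fX.
  have hu : uniq (map (@fv R m c) (0%N :: s)).
    by rewrite (map_inj_uniq (@fv_inj R m c)); exact: uniq_sF0.
  have := uniq_leq_size hu hsub.
  rewrite size_map /= -/M => h.
  have := leq_trans h hcard; rewrite ltnS //.
set L := nseq (size (fmt_vals gamma) - M) 0 ++ pairmap (fun a b => @fv R m c (b - a)%N) 0%N s.
have [h1 h2 h3 h4] := ex_list R (isF0 E m) (all_sF m c) (path_sF m c).
rewrite -/s (last_sF m c) in h2 h3.
have sL : size L = size w by rewrite size_cat size_nseq size_pairmap sz subnK.
have hL : all (fun y => 0 <= y) L.
  by rewrite all_cat h4 andbT; apply/allP => y; rewrite mem_nseq => /andP[_ /eqP ->].
set p := fun x => nth 0 L (index x w).
have mpw : map p w = L by apply: map_index_nth (RbBot R) _ _ uw sL.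
have sumL : \sum_(y <- L) y = 1.
  rewrite big_cat /= big1_seq; last by move=> y /andP[_]; rewrite mem_nseq => /andP[_ /eqP].
  by rewrite add0r -(fvU R m c) -h2 fv0 add0r.
have prL : @prefF R m c (@fv R m c 0%N) L.
  apply: prefF_nseq => //; exists 0%N; split => //; exact: isF0 E m.
exists p; split; last first.
  rewrite /target -GU hent mpw big_cat /= big1_seq; last first.
    by move=> y /andP[_]; rewrite mem_nseq => /andP[_ /eqP ->]; rewrite /e0 eqxx.
  by rewrite add0r h3 GG0 subr0.
split.
  move=> x; rewrite /p; case: (ltnP (index x w) (size L)) => h.
    by apply: (allP hL); rewrite mem_nth.
  by rewrite nth_default.
split.
  move=> x hx; rewrite /p nth_default // sL memNindex //.
  by rewrite (perm_mem pw).
split; first by rewrite hsum mpw.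
move=> x hx.
have xw : x \in w by rewrite (perm_mem pw).
have hi : (index x w < size w)%N by rewrite index_mem.
have [X [hX eX]] := prL _ (eq_ind_r (fun k => (index x w < k)%N) hi sL).
rewrite -(nth_index (RbBot R) xw) hcdf // mpw.
rewrite fv0 add0r in eX; rewrite eX.
exact: float_of_isF.
Qed.
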